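(* Let $\{X,Y\}$ be a partition of $\mathbb{R}$ into two infinite subsets, let $f$ be a two-point selection on $X$ and $g$ a two-point selection on $Y$. Define $h=f\oplus g$ on $[\mathbb{R}]^2$ by $h(\{x,y\})=x$ if $x\in X$ and $y\in Y$; $h(\{x,y\})=f(\{x,y\})$ if $x,y\in X$; $h(\{x,y\})=g(\{x,y\})$ if $x,y\in Y$. Then $$\mathcal{B}_{f\oplus g}(\mathbb{R}) = \mathcal{B}_f(X)\oplus\mathcal{B}_g(Y),$$ where for $\sigma$-algebras $\mathcal{A}$ on $X$ and $\mathcal{B}$ on $Y$, $\mathcal{A}\oplus\mathcal{B}=\{A\cup B: A\in\mathcal{A},\ B\in\mathcal{B}\}$.
   Context: For a set $Z$, $[Z]^2$ is the set of two-element subsets of $Z$; a two-point selection on $Z$ is a map $f:[Z]^2\to Z$ with $f(F)\in F$. Write $r<_f s$ if $f(\{r,s\})=r$, and $(\leftarrow,r)_f=\{x\in Z: x<_f r\}$, $(r,\rightarrow)_f=\{x\in Z: r<_f x\}$. The topology $\tau_f$ on $Z$ is generated (as a subbase) by all these sets, and $\mathcal{B}_f(Z)$ is the $\sigma$-algebra on $Z$ generated by $\tau_f$. *)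

(* Defs.v *)
From HB Require Import structures.
From mathcomp Require Import all_boot all_order all_algebra.
From mathcomp Require Import boolp classical_sets cardinality reals.
From mathcomp Require Import measurable_structure.
Set Implicit Arguments. Unset Strict Implicit. Unset Printing Implicit Defensive.
Local Open Scope classical_set_scope.

Section TwoPoint.
Variable T : Type.

(* A two-point selection on Z, represented as a symmetric binary function:
   f x y is f({x,y}) for distinct x y in Z. *)
Definition two_point_selection (Z : set T) (f : T -> T -> T) : Prop :=
  forall x y, Z x -> Z y -> x <> y -> (f x y = x \/ f x y = y) /\ f x y = f y x.

Definition sel_lt (Z : set T) (f : T -> T -> T) (r s : T) : Prop :=
  Z r /\ Z s /\ r <> s /\ f r s = r.

Definition left_ray (Z : set T) f (r : T) : set T := [set x | sel_lt Z f x r].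
Definition right_ray (Z : set T) f (r : T) : set T := [set x | sel_lt Z f r x].

Definition sel_subbase (Z : set T) f : set (set T) :=
  [set A | exists r, Z r /\ (A = left_ray Z f r \/ A = right_ray Z f r)].

(* the topology on Z generated by the subbase S: unions of finite
   intersections (the empty intersection being Z) of members of S *)
Definition gen_topology (Z : set T) (S : set (set T)) : set (set T) :=
  [set U | U `<=` Z /\ forall x, U x -> exists s : seq (set T),
     (forall A, A \in s -> S A) /\
     (Z `&` \bigcap_(A in [set` s]) A) x /\
     (Z `&` \bigcap_(A in [set` s]) A) `<=` U].

Definition tau_sel (Z : set T) f : set (set T) := gen_topology Z (sel_subbase Z f).

Definition borel_sel (Z : set T) f : set (set T) := <<s Z, tau_sel Z f >>.

Definition sigma_sum (A B : set (set T)) : set (set T) :=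
  [set C | exists U V, A U /\ B V /\ C = U `|` V].

Definition sel_sum (X : set T) (f g : T -> T -> T) (x y : T) : T :=
  if `[< X x >] then (if `[< X y >] then f x y else x)
  else (if `[< X y >] then y else g x y).
End TwoPoint.

(* Main.v *)
Require Import Defs.
From HB Require Import structures.
From mathcomp Require Import all_boot all_order all_algebra.
From mathcomp Require Import boolp classical_sets cardinality reals.
From mathcomp Require Import measurable_structure.
Local Open Scope classical_set_scope.

Section GT.
Variables (T : Type) (Z : set T) (S : set (set T)).
Local Notation op := (gen_topology Z S).

Lemma gt_sub U : op U -> U `<=` Z.
Proof. by case. Qed.

Lemma gt_local U : U `<=` Z ->
  (forall x, U x -> exists O, op O /\ O x /\ O `<=` U) -> op U.
Proof.
move=> UZ H; split=> // x Ux.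
have [O [[OZ HO] [Ox OU]]] := H x Ux.
have [s [sS [sx ssub]]] := HO x Ox.
by exists s; split=> //; split=> //; apply: subset_trans ssub OU.
Qed.

Lemma gt0 : op set0.
Proof. by split=> // x. Qed.

Lemma gtZ : op Z.
Proof.
split=> // x Zx; exists [::]; split; first by move=> A; rewrite in_nil.
split; first by split=> // A; rewrite /= in_nil.
by move=> y [].
Qed.

Lemma gtS A : S A -> A `<=` Z -> op A.
Proof.
move=> SA AZ; split=> // x Ax; exists [:: A]; split.
  by move=> B; rewrite inE => /eqP->.
split; first by split; [exact: AZ | move=> B; rewrite /= inE => /eqP->].
by move=> y [_ H]; apply: H; rewrite /= inE eqxx.
Qed.

Lemma gtI U V : op U -> op V -> op (U `&` V).
Proof.
move=> [UZ HU] [VZ HV]; split; first by move=> x [/UZ].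
move=> x [Ux Vx].
have [s1 [s1S [s1x s1U]]] := HU x Ux.
have [s2 [s2S [s2x s2V]]] := HV x Vx.
exists (s1 ++ s2); split.
  by move=> A; rewrite mem_cat => /orP[/s1S|/s2S].
split.
  split; first by case: s1x.
  move=> A; rewrite /= mem_cat => /orP[As|As].
    by case: s1x => _; apply.
  by case: s2x => _; apply.
move=> y [Zy Hy]; split.
  by apply: s1U; split=> // A As; apply: Hy; rewrite /= mem_cat As.
by apply: s2V; split=> // A As; apply: Hy; rewrite /= mem_cat As orbT.
Qed.

Lemma gt_bigcap (s : seq (set T)) : (forall A, A \in s -> op (A `&` Z)) ->
  op (Z `&` \bigcap_(A in [set` s]) A).
Proof.
elim: s => [|a s IH] H.
  rewrite (_ : _ `&` _ = Z); first exact: gtZ.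
  by apply/seteqP; split=> x; [case|move=> Zx; split=> // A; rewrite /= in_nil].
rewrite (_ : _ `&` _ = (a `&` Z) `&` (Z `&` \bigcap_(A in [set` s]) A)).
  apply: gtI; first by apply: H; rewrite inE eqxx.
  by apply: IH => A As; apply: H; rewrite inE As orbT.
apply/seteqP; split=> x.
  move=> [Zx Hx]; split; first by split=> //; apply: Hx; rewrite /= inE eqxx.
  by split=> // A As; apply: Hx; rewrite /= inE As orbT.
move=> [[ax _] [Zx Hx]]; split=> // A; rewrite /= inE => /orP[/eqP->//|As].
exact: Hx.
Qed.

End GT.

Lemma restrict_open T (S1 : set (set T)) (W : set T) (S2 : set (set T)) :
  (forall A, S1 A -> gen_topology W S2 (A `&` W)) ->
  forall U, gen_topology setT S1 U -> gen_topology W S2 (U `&` W).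
Proof.
move=> H U [_ HU]; apply: gt_local; first by move=> x [].
move=> x [Ux Wx]; have [s [sS [sx sU]]] := HU x Ux.
exists (W `&` \bigcap_(A in [set` s]) A); split.
  by apply: gt_bigcap => A As; apply: H; apply: sS.
split; first by split=> //; case: sx.
by move=> y [Wy Hy]; split=> //; apply: sU.
Qed.

Lemma extend_open T (S1 : set (set T)) (W : set T) (S2 : set (set T)) :
  (forall A, S2 A -> exists O, gen_topology setT S1 O /\ O `&` W = A) ->
  forall V, gen_topology W S2 V ->
  exists O, gen_topology setT S1 O /\ O `&` W = V.
Proof.
move=> H.
have Hs : forall s : seq (set T), (forall A, A \in s -> S2 A) ->
    exists O, gen_topology setT S1 O /\ O `&` W = W `&` \bigcap_(A in [set` s]) A.
  elim=> [|a s IH] sS.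
    exists setT; split; first exact: gtZ.
    by apply/seteqP; split=> x; [case=> _ Wx; split=> // A; rewrite /= in_nil|case].
  have [Oa [oa ea]] := H a (sS a (mem_head _ _)).
  have [O [oO eO]] : exists O, gen_topology setT S1 O /\ O `&` W = W `&` \bigcap_(A in [set` s]) A.
    by apply: IH => A As; apply: sS; rewrite inE As orbT.
  exists (Oa `&` O); split; first exact: gtI.
  apply/seteqP; split=> x.
    move=> [[Oax Ox] Wx]; split=> //.
    have : (O `&` W) x by [].
    rewrite eO => -[_ Hx] A; rewrite /= inE => /orP[/eqP->|As].
      by rewrite -ea.
    exact: Hx.
  move=> [Wx Hx]; split=> //; split.
    have : a x by apply: Hx; rewrite /= inE eqxx.
    by rewrite -ea => -[].
  have : (W `&` \bigcap_(A in [set` s]) A) x.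
    by split=> // A As; apply: Hx; rewrite /= inE As orbT.
  by rewrite -eO => -[].
move=> V [VW HV].
exists [set z | exists O', gen_topology setT S1 O' /\ O' `&` W `<=` V /\ O' z].
split.
  apply: gt_local => // x [O' [oO' [sub O'x]]]; exists O'; split=> //; split=> //.
  by move=> y O'y; exists O'.
apply/seteqP; split=> z.
  by move=> [[O' [_ [sub O'z]]] Wz]; apply: sub.
move=> Vz; have [s [sS [sz sV]]] := HV z Vz.
have [O' [oO' eO']] := Hs s sS.
split; last exact: VW.
exists O'; split=> //; split; first by rewrite eO'.
have : (O' `&` W) z by rewrite eO'.
by case.
Qed.

Section Main.
Variables (T : Type) (X : set T) (f g : T -> T -> T).
Hypotheses (hf : two_point_selection X f) (hg : two_point_selection (~` X) g).
Local Notation H := (sel_sum X f g).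

Lemma hXX r s : X r -> X s -> H r s = f r s.
Proof. by move=> Xr Xs; rewrite /sel_sum (asboolT Xr) (asboolT Xs). Qed.
Lemma hXN r s : X r -> ~ X s -> H r s = r.
Proof. by move=> Xr Xs; rewrite /sel_sum (asboolT Xr) (asboolF Xs). Qed.
Lemma hNX r s : ~ X r -> X s -> H r s = s.
Proof. by move=> Xr Xs; rewrite /sel_sum (asboolF Xr) (asboolT Xs). Qed.
Lemma hNN r s : ~ X r -> ~ X s -> H r s = g r s.
Proof. by move=> Xr Xs; rewrite /sel_sum (asboolF Xr) (asboolF Xs). Qed.

Lemma neqXN r s : X r -> ~ X s -> r <> s.
Proof. by move=> Xr Xs rs; apply: Xs; rewrite -rs. Qed.

Lemma subX A : sel_subbase setT H A -> tau_sel X f (A `&` X).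
Proof.
move=> [r [_ [->|->]]]; case: (pselect (X r)) => Xr.
- rewrite (_ : _ `&` _ = left_ray X f r).
    by apply: gtS; [exists r; split=> //; left | move=> z []].
  apply/seteqP; split=> z.
    by move=> [[_ [_ [zr e]]] Xz]; split=> //; split=> //; split=> //; rewrite -hXX.
  by move=> [Xz [_ [zr e]]]; split=> //; split=> //; split=> //; split=> //; rewrite hXX.
- rewrite (_ : _ `&` _ = X); first exact: gtZ.
  apply/seteqP; split=> z; first by case.
  move=> Xz; split=> //; split=> //; split=> //; split; first exact: neqXN.
  exact: hXN.
- rewrite (_ : _ `&` _ = right_ray X f r).
    by apply: gtS; [exists r; split=> //; right | move=> z [_ []]].
  apply/seteqP; split=> z.
    by move=> [[_ [_ [zr e]]] Xz]; split=> //; split=> //; split=> //; rewrite -hXX.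
  by move=> [Xr' [Xz [zr e]]]; split=> //; split=> //; split=> //; split=> //; rewrite hXX.
- rewrite (_ : _ `&` _ = set0); first exact: gt0.
  apply/seteqP; split=> z //.
  move=> [[_ [_ [rz e]]] Xz]; apply: rz; by rewrite -e hNX.
Qed.

Lemma subY A : sel_subbase setT H A -> tau_sel (~` X) g (A `&` ~` X).
Proof.
move=> [r [_ [->|->]]]; case: (pselect (X r)) => Xr.
- rewrite (_ : _ `&` _ = set0); first exact: gt0.
  apply/seteqP; split=> z //.
  move=> [[_ [_ [rz e]]] Xz]; apply: rz; by rewrite -e hNX.
- rewrite (_ : _ `&` _ = left_ray (~` X) g r).
    by apply: gtS; [exists r; split=> //; left | move=> z []].
  apply/seteqP; split=> z.
    by move=> [[_ [_ [zr e]]] Xz]; split=> //; split=> //; split=> //; rewrite -hNN.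
  by move=> [Xz [_ [zr e]]]; split=> //; split=> //; split=> //; split=> //; rewrite hNN.
- rewrite (_ : _ `&` _ = ~` X); first exact: gtZ.
  apply/seteqP; split=> z; first by case.
  move=> Xz; split=> //; split=> //; split=> //; split.
    by move=> rz; apply: Xz; rewrite -rz.
  exact: hXN.
- rewrite (_ : _ `&` _ = right_ray (~` X) g r).
    by apply: gtS; [exists r; split=> //; right | move=> z [_ []]].
  apply/seteqP; split=> z.
    by move=> [[_ [_ [zr e]]] Xz]; split=> //; split=> //; split=> //; rewrite -hNN.
  by move=> [Xr' [Xz [zr e]]]; split=> //; split=> //; split=> //; split=> //; rewrite hNN.
Qed.

Lemma extX A : sel_subbase X f A ->
  exists O, tau_sel setT H O /\ O `&` X = A.
Proof.
move=> [r [Xr [->|->]]].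
- exists (left_ray setT H r); split.
    by apply: gtS => //; exists r; split=> //; left.
  apply/seteqP; split=> z.
    by move=> [[_ [_ [zr e]]] Xz]; split=> //; split=> //; split=> //; rewrite -hXX.
  by move=> [Xz [_ [zr e]]]; split=> //; split=> //; split=> //; split=> //; rewrite hXX.
- exists (right_ray setT H r); split.
    by apply: gtS => //; exists r; split=> //; right.
  apply/seteqP; split=> z.
    by move=> [[_ [_ [zr e]]] Xz]; split=> //; split=> //; split=> //; rewrite -hXX.
  by move=> [Xr' [Xz [zr e]]]; split=> //; split=> //; split=> //; split=> //; rewrite hXX.
Qed.

Lemma extY A : sel_subbase (~` X) g A ->
  exists O, tau_sel setT H O /\ O `&` ~` X = A.
Proof.
move=> [r [Xr [->|->]]].
- exists (left_ray setT H r); split.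
    by apply: gtS => //; exists r; split=> //; left.
  apply/seteqP; split=> z.
    by move=> [[_ [_ [zr e]]] Xz]; split=> //; split=> //; split=> //; rewrite -hNN.
  by move=> [Xz [_ [zr e]]]; split=> //; split=> //; split=> //; split=> //; rewrite hNN.
- exists (right_ray setT H r); split.
    by apply: gtS => //; exists r; split=> //; right.
  apply/seteqP; split=> z.
    by move=> [[_ [_ [zr e]]] Xz]; split=> //; split=> //; split=> //; rewrite -hNN.
  by move=> [Xr' [Xz [zr e]]]; split=> //; split=> //; split=> //; split=> //; rewrite hNN.
Qed.

End Main.

Section Sig.
Variables (T : Type) (G : set (set T)).
Local Notation M := (<<s setT, G>>).

Lemma sU A B : M A -> M B -> M (A `|` B).
Proof.
move=> MA MB; rewrite -bigcup2E; apply: sigma_algebra_bigcup.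
by case=> [|[|n]] //=; exact: sigma_algebra0.
Qed.

Lemma sC A : M A -> M (setT `\` A).
Proof. exact: sigma_algebraCD. Qed.

Lemma sI A B : M A -> M B -> M (A `&` B).
Proof.
move=> MA MB; rewrite (_ : _ `&` _ = setT `\` ((setT `\` A) `|` (setT `\` B))).
  by apply: sC; apply: sU; apply: sC.
apply/seteqP; split=> z.
  by move=> [Az Bz]; split=> // -[[_ ?]|[_ ?]].
move=> [_ H]; split; apply: contrapT => nz; apply: H; [left|right]; done.
Qed.

End Sig.

Lemma trace_sub T (S1 : set (set T)) W S2 :
  <<s setT, gen_topology setT S1>> W ->
  (forall A, S2 A -> exists O, gen_topology setT S1 O /\ O `&` W = A) ->
  <<s W, gen_topology W S2>> `<=` <<s setT, gen_topology setT S1>>.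
Proof.
move=> MW Hext.
pose C := [set A | <<s setT, gen_topology setT S1>> A /\ A `<=` W].
suff [Hs Hsub] : sigma_algebra W C /\ (gen_topology W S2 `<=` C).
  by move=> A /(smallest_sub Hs Hsub) [].
split.
  split.
  - by split; [exact: sigma_algebra0|].
  - move=> A [MA AW]; split; last by move=> z [].
    rewrite (_ : _ `\` _ = setT `\` ((setT `\` W) `|` A)).
      by apply: sC; apply: sU => //; apply: sC.
    apply/seteqP; split=> z.
      by move=> [Wz nA]; split=> // -[[_ ?]|?].
    move=> [_ H]; split; [apply: contrapT => nz; apply: H; left|move=> Az; apply: H; right]; done.
  - move=> F HF; split.
      by apply: sigma_algebra_bigcup => n; case: (HF n).
    by move=> z [n _ Fz]; case: (HF n) => _; apply.
move=> V oV; have [O [oO <-]] := @extend_open _ _ _ _ Hext V oV.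
split; last by move=> z [].
by apply: sI => //; apply: sub_sigma_algebra.
Qed.

Lemma gen_sub T (D : set T) (G : set (set T)) :
  (forall A, G A -> A `<=` D) -> forall A, <<s D, G>> A -> A `<=` D.
Proof.
move=> HG A; apply: (smallest_sub (X:=[set A | A `<=` D])) => //.
split => //.
- by move=> B _ z [].
- by move=> F HF z [n _ Fz]; apply: (HF n).
Qed.

Lemma BX T (X : set T) (f g : T -> T -> T) :
  two_point_selection X f -> borel_sel setT (sel_sum X f g) X.
Proof.
move=> hf.
set H := sel_sum X f g.
pose O := [set x | X x /\ exists r, X r /\ sel_lt X f x r].
have oO : tau_sel setT H O.
  apply: gt_local => // x [Xx [r [Xr [_ [_ [xr e]]]]]].
  exists (left_ray setT H r); split.
    by apply: gtS => //; exists r; split=> //; left.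
  split; first by split=> //; split=> //; split=> //; rewrite /H hXX.
  move=> z [_ [_ [zr e']]]; case: (pselect (X z)) => Xz.
    by split=> //; exists r; split=> //; split=> //; split=> //; split=> //; move: e'; rewrite /H hXX.
  by exfalso; apply: zr; rewrite -e' /H hNX.
rewrite (_ : X = O `|` (X `\` O)); last first.
  apply/seteqP; split=> z; first by move=> Xz; case: (pselect (O z)) => Oz; [left|right].
  by move=> [[]|[]].
apply: sU; first exact: sub_sigma_algebra.
case: (pselect (exists m, (X `\` O) m)) => [[m [Xm nOm]]|none]; last first.
  rewrite (_ : _ `\` _ = set0); first exact: sigma_algebra0.
  by apply/seteqP; split=> z // Hz; apply: none; exists z.
rewrite (_ : _ `\` _ = setT `\` (~` [set m])).
  apply: sC; apply: sub_sigma_algebra; apply: gt_local => // z zm.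
  have zm' : z <> m by [].
  case: (pselect (H z m = z)) => e.
    exists (left_ray setT H m); split.
      by apply: gtS => //; exists m; split=> //; left.
    by split; [do 3 split=> //|move=> y [_ [_ [ym _]]]].
  have e2 : H m z = m.
    case: (pselect (X z)) => Xz.
      have [[e1|e1] sym] := hf z m Xz Xm zm'.
        by exfalso; apply: e; rewrite /H hXX.
      by rewrite /H hXX // -sym.
    by rewrite /H hXN.
  exists (right_ray setT H m); split.
    by apply: gtS => //; exists m; split=> //; right.
  split; first by do 3 split=> //; move=> mz; apply: zm'; rewrite mz.
  by move=> y [_ [_ [my _]]] ym; apply: my; rewrite ym.
apply/seteqP; split=> z.
  move=> [Xz nOz]; split=> //= zm; apply: zm.
  apply: contrapT => zm'.
  have [[e1|e1] sym] := hf z m Xz Xm zm'.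
    by apply: nOz; split=> //; exists m; split=> //; do 3 split=> //.
  apply: nOm; split=> //; exists z; split=> //; do 3 split=> //.
    by move=> mz; apply: zm'; rewrite mz.
  by rewrite -sym.
by move=> [_ /= /contrapT ->].
Qed.

Theorem theorem3p4 (R : realType) (X Y : set R) (f g : R -> R -> R) :
  X `&` Y = set0 -> X `|` Y = setT ->
  ~ finite_set X -> ~ finite_set Y ->
  two_point_selection X f -> two_point_selection Y g ->
  borel_sel setT (sel_sum X f g) = sigma_sum (borel_sel X f) (borel_sel Y g).
Proof.
move=> XY0 XYT _ _ hf hg.
have eY : Y = ~` X.
  apply/seteqP; split=> z.
    by move=> Yz Xz; have : (X `&` Y) z by []; rewrite XY0.
  move=> nXz; have : (X `|` Y) z by rewrite XYT.
  by case.
subst Y.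
set H := sel_sum X f g.
have BXs : forall A, borel_sel X f A -> A `<=` X.
  by apply: gen_sub => A; case.
have BYs : forall A, borel_sel (~` X) g A -> A `<=` ~` X.
  by apply: gen_sub => A; case.
apply/seteqP; split.
  apply: (smallest_sub (X:=sigma_sum (borel_sel X f) (borel_sel (~` X) g))).
    split.
    - exists set0, set0; split; first exact: sigma_algebra0.
      by split; [exact: sigma_algebra0|rewrite setU0].
    - move=> C [U [V [BU [BV ->]]]]; exists (X `\` U), (~` X `\` V).
      split; first exact: sigma_algebraCD.
      split; first exact: sigma_algebraCD.
      have UX := BXs U BU; have VX := BYs V BV.
      apply/seteqP; split=> z.
        move=> [_ nUV]; case: (pselect (X z)) => Xz; [left|right]; split=> //.
          by move=> ?; apply: nUV; left.
        by move=> ?; apply: nUV; right.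
      move=> [[Xz nU]|[nXz nV]]; split=> // -[Uz|Vz].
      + by apply: nU.
      + exact: (VX z Vz).
      + exact: (nXz (UX z Uz)).
      + by apply: nV.
    - move=> F HF.
      have Hex : forall n, exists q : set R * set R, borel_sel X f q.1 /\
          borel_sel (~` X) g q.2 /\ F n = q.1 `|` q.2.
        by move=> n; have [U [V [BU [BV e]]]] := HF n; exists (U, V).
      have [p Hp] := choice Hex.
      exists (\bigcup_n (p n).1), (\bigcup_n (p n).2); split.
        by apply: sigma_algebra_bigcup => n; case: (Hp n).
      split.
        by apply: sigma_algebra_bigcup => n; case: (Hp n) => _ [].
      rewrite -bigcupU; apply: eq_bigcupr => n _.
      by case: (Hp n) => _ [].
  move=> U oU; exists (U `&` X), (U `&` ~` X); split.
    apply: sub_sigma_algebra; exact: (@restrict_open _ _ _ _ (@subX _ X f g) U oU).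
  split.
    apply: sub_sigma_algebra; exact: (@restrict_open _ _ _ _ (@subY _ X f g) U oU).
  apply/seteqP; split=> z.
    by move=> Uz; case: (pselect (X z)) => Xz; [left|right].
  by move=> [[]|[]].
move=> C [U [V [BU [BV ->]]]]; apply: sU.
  exact: (@trace_sub _ _ _ _ (@BX _ X f g hf) (@extX _ X f g)).
apply: (@trace_sub _ _ _ _ _ (@extY _ X f g)) => //.
rewrite (_ : ~` X = setT `\` X); first exact: sC (@BX _ X f g hf).
by rewrite setTD.
Qed.
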